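(* If $G$ is an appended $3$-star of order $n$, maximum degree $\Delta=3$ and diameter at most $6$, then $\gamma^{\rm ID}(G)=\frac23 n+\frac13$.
   Context: An identifying code of a graph $G$ is a set $C\subseteq V(G)$ such that every vertex $v$ has $N[v]\cap C\neq\emptyset$ and for all distinct $u,v$, $N[u]\cap C \ne N[v]\cap C$, where $N[v]$ is the closed neighborhood; $\gamma^{\rm ID}(G)$ is its minimum size. A 3-star is $K_{1,3}$. For a graph $G'$, a vertex $v$ of $G'$ and a star $S$, $G'\rhd_v S$ is the graph obtained from the disjoint union of $G'$ and $S$ by identifying $v$ with a leaf of $S$. An appended 3-star is a graph $G_p$ ($p\ge 0$) where $G_0$ is a 3-star and $G_i=G_{i-1}\rhd_{v_{i-1}}S_i$ for $i=1,\dots,p$, with each $S_i$ a 3-star and $v_{i-1}$ a vertex of $G_{i-1}$. *)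

(* Defs.v *)
From mathcomp Require Import all_boot all_order all_algebra.
Set Implicit Arguments. Unset Strict Implicit. Unset Printing Implicit Defensive.

Section Graphs.
Variables (T : finType) (e : rel T).

Definition cnbhd (v : T) : {set T} := [set u | (u == v) || e v u].

Definition deg (v : T) : nat := #|[set u | e v u]|.
Definition maxdeg : nat := \max_(v : T) deg v.

Definition idcodeb (C : {set T}) : bool :=
  [forall v, cnbhd v :&: C != set0] &&
  [forall u, forall v, (u != v) ==> (cnbhd u :&: C != cnbhd v :&: C)].

(* gamma^ID: minimum size of an identifying code (0 if none exists) *)
Definition gammaID : nat :=
  match [pick C | idcodeb C] with
  | Some C0 => #|[arg min_(C < C0 | idcodeb C) #|C|]|
  | None => 0
  end.

Definition diam_le (d : nat) : Prop :=
  forall u v : T, exists s : seq T, [/\ size s <= d, path e u s & last u s = v].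

End Graphs.

(* Concrete model of the appended 3-star G_p, on vertices 0 .. 3p+3.
   G_0 is the star with centre 0 and leaves 1,2,3.  The i-th appended star
   (i = 0..p-1, i.e. S_{i+1}) has new centre c = 3i+4 and new leaves c+1, c+2,
   and its third leaf is identified with the vertex vs_i of G_i
   (so vs_i < 3i+4). *)
Definition app3_arc (vs : seq nat) (x y : nat) : bool :=
  ((x == 0) && (y \in [:: 1; 2; 3])) ||
  has (fun i => (x == 3 * i + 4) &&
        [|| y == nth 0 vs i, y == 3 * i + 5 | y == 3 * i + 6])
      (iota 0 (size vs)).

Definition app3_edge (vs : seq nat) (x y : nat) : bool :=
  app3_arc vs x y || app3_arc vs y x.

Definition app3_valid (vs : seq nat) : bool :=
  all (fun i => nth 0 vs i < 3 * i + 4) (iota 0 (size vs)).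

Definition appended_3star (T : finType) (e : rel T) : Prop :=
  exists vs : seq nat, app3_valid vs /\
  #|T| = 3 * size vs + 4 /\
  exists f : T -> nat, [/\ injective f,
     (forall x, f x < 3 * size vs + 4) &
     (forall x y, e x y = app3_edge vs (f x) (f y))].

(* Main.v *)
Require Import Defs.
From mathcomp Require Import all_boot all_order all_algebra.
From mathcomp Require Import zify ring.
Set Implicit Arguments. Unset Strict Implicit. Unset Printing Implicit Defensive.
Import GRing.Theory Num.Theory.

Definition nv (vs : seq nat) := 3 * size vs + 4.
Definition E (vs : seq nat) : rel nat := app3_edge vs.

Definition degb (n : nat) (E : rel nat) : bool :=
  all (fun x => count (E x) (iota 0 n) <= 3) (iota 0 n).

Fixpoint reach (n : nat) (E : rel nat) (j u : nat) : seq nat :=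
  match j with
  | 0 => [:: u]
  | j.+1 => let R := reach n E j u in
      R ++ [seq w <- iota 0 n | (w \notin R) && has (fun z => E z w) R]
  end.

Definition allin (R : seq nat) (n : nat) : bool := all (fun w => w \in R) (iota 0 n).

Definition diamb (n : nat) (E : rel nat) : bool :=
  all (fun u => allin (reach n E 6 u) n) (iota 0 n).

Definition tab (n : nat) (E : rel nat) : seq (seq bool) :=
  [seq [seq E x y | y <- iota 0 n] | x <- iota 0 n].
Definition Et (t : seq (seq bool)) : rel nat := fun x y => nth false (nth [::] t x) y.
Definition good (vs : seq nat) :=
  let F := Et (tab (nv vs) (E vs)) in degb (nv vs) F && diamb (nv vs) F.

Definition isob (n : nat) (E1 E2 : rel nat) (s : seq nat) : bool :=
  [&& uniq s, size s == n, all (fun x => x < n) s &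
   all (fun x => all (fun y => E1 x y == E2 (nth 0 s x) (nth 0 s y)) (iota 0 n)) (iota 0 n)].

Definition cN (E : rel nat) (v w : nat) := (w == v) || E v w.

Definition idnat (n : nat) (E : rel nat) (L : seq nat) : bool :=
  all (fun v => has (fun w => (w \in L) && cN E v w) (iota 0 n)) (iota 0 n) &&
  all (fun u => all (fun v => (u == v) ||
     has (fun w => (w \in L) && (cN E u w != cN E v w)) (iota 0 n)) (iota 0 n)) (iota 0 n).

Definition indep (cs : seq (seq nat)) (X : seq nat) : bool :=
  all (fun c => ~~ all (fun w => w \in X) c) cs.

Fixpoint srch (cs : seq (seq nat)) (k : nat) (R cands : seq nat) : bool :=
  match k with
  | 0 => false
  | k'.+1 =>
    (fix loop (cands : seq nat) : bool :=
       match cands with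
       | [::] => true
       | v :: cs' => (size cands < k) ||
          ((~~ indep cs (v :: R) ||
            srch cs k' (v :: R) [seq w <- cs' | indep cs (w :: v :: R)]) && loop cs')
       end) cands
  end.

Definition allcons (n : nat) (E : rel nat) : seq (seq nat) :=
  [seq [seq w <- iota 0 n | cN E v w] | v <- iota 0 n] ++
  [seq [seq w <- iota 0 n | cN E u w != cN E v w] | u <- iota 0 n, v <- [seq v <- iota 0 n | u != v]].

Definition mincons (cs : seq (seq nat)) : seq (seq nat) :=
  [seq c <- cs | ~~ has (fun d : seq nat => (d != c) && all (fun w => w \in c) d) cs].

Definition Lcode (vs : seq nat) : seq nat :=
  [seq w <- iota 0 (nv vs) | if w < 4 then w != 0 else (w - 4) %% 3 != 0].

Definition gamma_ok (r : seq nat) : bool :=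
  let n := nv r in
  [&& idnat n (E r) (Lcode r), size (Lcode r) == 2 * size r + 3 &
      srch (mincons (allcons n (E r))) (size r + 2) [::] (iota 0 n)].
Definition reps : seq (seq nat) := [:: [:: ]; [:: 1]; [:: 1; 1]; [:: 1; 2]; [:: 1; 1; 2]; [:: 1; 2; 3]; [:: 1; 1; 2; 2]; [:: 1; 1; 2; 3]; [:: 1; 1; 2; 2; 3]; [:: 1; 1; 2; 2; 3; 3]].
Definition certs : seq (seq nat * nat * (seq nat * seq nat)) := [:: ([:: ], 1, ([:: 1], [:: 0; 1; 2; 3; 4; 5; 6]));
  ([:: ], 2, ([:: 1], [:: 0; 2; 1; 3; 4; 5; 6]));
  ([:: ], 3, ([:: 1], [:: 0; 2; 3; 1; 4; 5; 6]));
  ([:: 1], 1, ([:: 1; 1], [:: 0; 1; 2; 3; 4; 5; 6; 7; 8; 9]));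
  ([:: 1], 2, ([:: 1; 2], [:: 0; 1; 2; 3; 4; 5; 6; 7; 8; 9]));
  ([:: 1], 3, ([:: 1; 2], [:: 0; 1; 3; 2; 4; 5; 6; 7; 8; 9]));
  ([:: 1], 5, ([:: 1; 2], [:: 4; 1; 5; 6; 0; 2; 3; 7; 8; 9]));
  ([:: 1], 6, ([:: 1; 2], [:: 4; 1; 5; 6; 0; 3; 2; 7; 8; 9]));
  ([:: 1; 1], 2, ([:: 1; 1; 2], [:: 0; 1; 2; 3; 4; 5; 6; 7; 8; 9; 10; 11; 12]));
  ([:: 1; 1], 3, ([:: 1; 1; 2], [:: 0; 1; 3; 2; 4; 5; 6; 7; 8; 9; 10; 11; 12]));
  ([:: 1; 1], 5, ([:: 1; 1; 2], [:: 4; 1; 5; 6; 0; 2; 3; 7; 8; 9; 10; 11; 12]));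
  ([:: 1; 1], 6, ([:: 1; 1; 2], [:: 4; 1; 5; 6; 0; 3; 2; 7; 8; 9; 10; 11; 12]));
  ([:: 1; 1], 8, ([:: 1; 1; 2], [:: 4; 1; 5; 6; 7; 8; 9; 0; 2; 3; 10; 11; 12]));
  ([:: 1; 1], 9, ([:: 1; 1; 2], [:: 4; 1; 5; 6; 7; 8; 9; 0; 3; 2; 10; 11; 12]));
  ([:: 1; 2], 1, ([:: 1; 1; 2], [:: 0; 1; 2; 3; 7; 8; 9; 10; 11; 12; 4; 5; 6]));
  ([:: 1; 2], 2, ([:: 1; 1; 2], [:: 0; 2; 1; 3; 10; 11; 12; 7; 8; 9; 4; 5; 6]));
  ([:: 1; 2], 3, ([:: 1; 2; 3], [:: 0; 1; 2; 3; 4; 5; 6; 7; 8; 9; 10; 11; 12]));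
  ([:: 1; 1; 2], 2, ([:: 1; 1; 2; 2], [:: 0; 1; 2; 3; 4; 5; 6; 7; 8; 9; 10; 11; 12; 13; 14; 15]));
  ([:: 1; 1; 2], 3, ([:: 1; 1; 2; 3], [:: 0; 1; 2; 3; 4; 5; 6; 7; 8; 9; 10; 11; 12; 13; 14; 15]));
  ([:: 1; 2; 3], 1, ([:: 1; 1; 2; 3], [:: 0; 1; 2; 3; 4; 5; 6; 10; 11; 12; 13; 14; 15; 7; 8; 9]));
  ([:: 1; 2; 3], 2, ([:: 1; 1; 2; 3], [:: 0; 2; 1; 3; 10; 11; 12; 7; 8; 9; 13; 14; 15; 4; 5; 6]));
  ([:: 1; 2; 3], 3, ([:: 1; 1; 2; 3], [:: 0; 2; 3; 1; 10; 11; 12; 13; 14; 15; 4; 5; 6; 7; 8; 9]));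
  ([:: 1; 1; 2; 2], 3, ([:: 1; 1; 2; 2; 3], [:: 0; 1; 2; 3; 4; 5; 6; 7; 8; 9; 10; 11; 12; 13; 14; 15; 16; 17; 18]));
  ([:: 1; 1; 2; 3], 2, ([:: 1; 1; 2; 2; 3], [:: 0; 1; 2; 3; 4; 5; 6; 7; 8; 9; 13; 14; 15; 16; 17; 18; 10; 11; 12]));
  ([:: 1; 1; 2; 3], 3, ([:: 1; 1; 2; 2; 3], [:: 0; 1; 3; 2; 4; 5; 6; 7; 8; 9; 16; 17; 18; 13; 14; 15; 10; 11; 12]));
  ([:: 1; 1; 2; 2; 3], 3, ([:: 1; 1; 2; 2; 3; 3], [:: 0; 1; 2; 3; 4; 5; 6; 7; 8; 9; 10; 11; 12; 13; 14; 15; 16; 17; 18; 19; 20; 21]))].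

Definition chk (r : seq nat) (v : nat) : bool :=
  if good (rcons r v) then
    (size r < 6) &&
    match [seq c.2 | c <- certs & c.1 == (r, v)] with
    | (r', s) :: _ => [&& r' \in reps, size r' == (size r).+1 &
                         isob (nv r') (E (rcons r v)) (E r') s]
    | [::] => false
    end
  else true.

Definition tableok : bool := all (fun r => all (chk r) (iota 0 (nv r))) reps.
Definition gammasok : bool := all gamma_ok reps.

Lemma valid_nth vs i : app3_valid vs -> i < size vs -> nth 0 vs i < 3 * i + 4.
Proof. by move=> /allP H Hi; apply: H; rewrite mem_iota. Qed.

Lemma arc_bound vs x y : app3_valid vs -> app3_arc vs x y -> x < nv vs /\ y < nv vs.
Proof.
move=> Hv; rewrite /app3_arc /nv.
case/orP=> [/andP [/eqP -> Hy] | /hasP [i Hi /andP [/eqP -> H]]].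
  by move: Hy; rewrite !inE => /or3P [] /eqP ->; lia.
move: Hi; rewrite mem_iota add0n => /andP [_ Hi].
have := valid_nth Hv Hi.
by case/or3P: H => /eqP ->; lia.
Qed.

Lemma edge_bound vs x y : app3_valid vs -> E vs x y -> x < nv vs /\ y < nv vs.
Proof.
move=> Hv; rewrite /E /app3_edge => /orP [] /(arc_bound Hv) [] //.
Qed.

Lemma E_sym vs : symmetric (E vs).
Proof. by move=> x y; rewrite /E /app3_edge orbC. Qed.

Definition nw (vs : seq nat) (v x y : nat) : bool :=
  (x == nv vs) && [|| y == v, y == (nv vs).+1 | y == (nv vs).+2].

Lemma arc_rcons vs v x y :
  app3_arc (rcons vs v) x y = app3_arc vs x y || nw vs v x y.
Proof.
rewrite /app3_arc /nw /nv size_rcons.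
have -> : iota 0 (size vs).+1 = iota 0 (size vs) ++ [:: size vs] by rewrite -addn1 iotaD.
rewrite has_cat /= orbF -!orbA.
congr (_ || _); congr (_ || _).
  apply: eq_in_has => i; rewrite mem_iota add0n => /andP [_ Hi].
  by rewrite nth_rcons Hi.
rewrite nth_rcons ltnn eqxx.
have E5 : 3 * size vs + 5 = (3 * size vs + 4).+1 by lia.
have E6 : 3 * size vs + 6 = (3 * size vs + 4).+2 by lia.
by rewrite E5 E6.
Qed.

Lemma E_rcons vs v x y :
  E (rcons vs v) x y = [|| E vs x y, nw vs v x y | nw vs v y x].
Proof.
rewrite /E /app3_edge !arc_rcons.
by case: (app3_arc vs x y); case: (app3_arc vs y x); case: (nw vs v x y); case: (nw vs v y x).
Qed.

Lemma valid_rcons vs v : app3_valid (rcons vs v) = app3_valid vs && (v < nv vs).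
Proof.
rewrite /app3_valid /nv size_rcons.
have -> : iota 0 (size vs).+1 = iota 0 (size vs) ++ [:: size vs] by rewrite -addn1 iotaD.
rewrite all_cat /= andbT.
congr (_ && _).
  apply: eq_in_all => i; rewrite mem_iota add0n => /andP [_ Hi].
  by rewrite nth_rcons Hi.
by rewrite nth_rcons ltnn eqxx.
Qed.

Lemma nv_rcons vs v : nv (rcons vs v) = nv vs + 3.
Proof. rewrite /nv size_rcons; lia. Qed.

Lemma in_iota0 x n : (x \in iota 0 n) = (x < n).
Proof. by rewrite mem_iota add0n. Qed.

Definition isoP (n : nat) (E1 E2 : rel nat) (s : nat -> nat) : Prop :=
  [/\ (forall x, x < n -> s x < n),
      (forall x y, x < n -> y < n -> s x = s y -> x = y) &
      (forall x y, x < n -> y < n -> E1 x y = E2 (s x) (s y))].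

Lemma isob_isoP n E1 E2 s : isob n E1 E2 s -> isoP n E1 E2 (nth 0 s).
Proof.
case/and4P=> Hu /eqP Hs /allP Hb /allP He; split.
- by move=> x Hx; apply: Hb; apply: mem_nth; rewrite Hs.
- move=> x y Hx Hy /eqP; rewrite nth_uniq ?Hs //; by move/eqP.
- move=> x y Hx Hy; have := He x; rewrite in_iota0 Hx => /(_ isT) /allP /(_ y).
  by rewrite in_iota0 Hy => /(_ isT) /eqP.
Qed.

Lemma isoP_comp n E1 E2 E3 s t :
  isoP n E1 E2 s -> isoP n E2 E3 t -> isoP n E1 E3 (t \o s).
Proof.
case=> [Hb1 Hi1 He1] [Hb2 Hi2 He2]; split => /=.
- by move=> x Hx; apply/Hb2/Hb1.
- by move=> x y Hx Hy /Hi2 H; apply: Hi1 => //; apply: H; apply: Hb1.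
- by move=> x y Hx Hy; rewrite He1 // He2 //; apply: Hb1.
Qed.

Lemma inj_surj n (s : nat -> nat) :
  (forall x, x < n -> s x < n) -> (forall x y, x < n -> y < n -> s x = s y -> x = y) ->
  forall y, y < n -> exists2 x, x < n & s x = y.
Proof.
move=> Hb Hi y Hy.
have Hu : uniq [seq s x | x <- iota 0 n].
  rewrite map_inj_in_uniq ?iota_uniq // => a b; rewrite !in_iota0 => Ha Hb'.
  exact: Hi.
have Hsub : {subset [seq s x | x <- iota 0 n] <= iota 0 n}.
  by move=> z /mapP [x]; rewrite !in_iota0 => Hx ->; rewrite Hb.
have Hsz : size (iota 0 n) <= size [seq s x | x <- iota 0 n] by rewrite size_map.
have [_ Heq] := uniq_min_size Hu Hsub Hsz.
have : y \in [seq s x | x <- iota 0 n] by rewrite Heq in_iota0.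
by case/mapP=> x; rewrite in_iota0 => Hx ->; exists x.
Qed.

Lemma perm_iso n (s : nat -> nat) :
  (forall x, x < n -> s x < n) -> (forall x y, x < n -> y < n -> s x = s y -> x = y) ->
  perm_eq [seq s x | x <- iota 0 n] (iota 0 n).
Proof.
move=> Hb Hi.
have Hu : uniq [seq s x | x <- iota 0 n].
  rewrite map_inj_in_uniq ?iota_uniq // => a b; rewrite !in_iota0 => Ha Hb'.
  exact: Hi.
have Hsub : {subset [seq s x | x <- iota 0 n] <= iota 0 n}.
  by move=> z /mapP [x]; rewrite !in_iota0 => Hx ->; rewrite Hb.
have Hsz : size (iota 0 n) <= size [seq s x | x <- iota 0 n] by rewrite size_map.
have [_ Heq] := uniq_min_size Hu Hsub Hsz.
by apply: uniq_perm => //; apply: iota_uniq.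
Qed.

Lemma degb_iso n E1 E2 s : isoP n E1 E2 s -> degb n E1 -> degb n E2.
Proof.
case=> Hb Hi He /allP H; apply/allP => y; rewrite in_iota0 => Hy.
have [x Hx <-] := inj_surj Hb Hi Hy.
rewrite -(permP (perm_iso Hb Hi)) count_map.
have -> : count (preim s (E2 (s x))) (iota 0 n) = count (E1 x) (iota 0 n).
  apply: eq_in_count => z; rewrite in_iota0 => Hz /=.
  by rewrite He.
by apply: H; rewrite in_iota0.
Qed.

Lemma mem_reachS n E j u w :
  (w \in reach n E j.+1 u) =
  (w \in reach n E j u) || ((w < n) && has (fun z => E z w) (reach n E j u)).
Proof.
rewrite /= mem_cat mem_filter mem_iota add0n /=.
by case: (w \in reach n E j u) => //=; rewrite andbC.
Qed.

Lemma reach_mono n E j u w : w \in reach n E j u -> w \in reach n E j.+1 u.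
Proof. by rewrite mem_reachS => ->. Qed.

Lemma reach_le n E j k u w : j <= k -> w \in reach n E j u -> w \in reach n E k u.
Proof.
move=> Hjk Hw; elim: k Hjk => [|k IH].
  by rewrite leqn0 => /eqP Hj; move: Hw; rewrite Hj.
rewrite leq_eqVlt => /orP [/eqP <- //| Hlt].
by apply: reach_mono; apply: IH.
Qed.

Lemma reach_bound n E j u w : u < n -> w \in reach n E j u -> w < n.
Proof.
move=> Hu; elim: j w => [|j IH] w.
  by rewrite inE => /eqP ->.
rewrite mem_reachS => /orP [/IH //| /andP [] //].
Qed.

Lemma reach_iso n E1 E2 s j u w : isoP n E1 E2 s -> u < n ->
  w \in reach n E1 j u -> s w \in reach n E2 j (s u).
Proof.
case=> Hb Hi He Hu; elim: j w => [|j IH] w.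
  by rewrite !inE => /eqP ->.
rewrite mem_reachS => /orP [/IH H| /andP [Hw /hasP [z Hz Hzw]]].
  by apply: reach_mono.
rewrite mem_reachS; apply/orP; right; rewrite Hb //=.
apply/hasP; exists (s z); first exact: IH.
by rewrite -He //; apply: reach_bound Hz.
Qed.

Lemma diambP n E : diamb n E -> forall u w, u < n -> w < n -> w \in reach n E 6 u.
Proof.
move=> /allP H u w Hu Hw; have := H u; rewrite in_iota0 Hu => /(_ isT) /allP.
by apply; rewrite in_iota0.
Qed.

Lemma diambI n E : (forall u w, u < n -> w < n -> w \in reach n E 6 u) -> diamb n E.
Proof.
move=> H; apply/allP => u; rewrite in_iota0 => Hu.
by apply/allP => w; rewrite in_iota0 => Hw; apply: H.
Qed.

Lemma diamb_iso n E1 E2 s : isoP n E1 E2 s -> diamb n E1 -> diamb n E2.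
Proof.
move=> Hs /diambP H; apply: diambI => u w Hu Hw.
case: (Hs) => Hb Hi _.
have [u' Hu' <-] := inj_surj Hb Hi Hu.
have [w' Hw' <-] := inj_surj Hb Hi Hw.
by apply: (reach_iso Hs Hu'); apply: H.
Qed.

Lemma good_iso n E1 E2 s : isoP n E1 E2 s -> degb n E1 && diamb n E1 -> degb n E2 && diamb n E2.
Proof. by move=> Hs /andP [H1 H2]; rewrite (degb_iso Hs H1) (diamb_iso Hs H2). Qed.

Definition agree n (E1 E2 : rel nat) := forall x y, x < n -> y < n -> E1 x y = E2 x y.

Lemma degb_agree n E1 E2 : agree n E1 E2 -> degb n E1 = degb n E2.
Proof.
move=> H; apply: eq_in_all => x; rewrite in_iota0 => Hx.
congr (_ <= _); apply: eq_in_count => y; rewrite in_iota0 => Hy.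
exact: H.
Qed.

Lemma reach_agree n E1 E2 j u : agree n E1 E2 -> u < n -> reach n E1 j u = reach n E2 j u.
Proof.
move=> H Hu; elim: j => [|j IH] //=.
rewrite IH; congr (_ ++ _); apply: eq_in_filter => w; rewrite in_iota0 => Hw.
congr (_ && _); apply: eq_in_has => z Hz; apply: H => //.
exact: (reach_bound Hu Hz).
Qed.

Lemma diamb_agree n E1 E2 : agree n E1 E2 -> diamb n E1 = diamb n E2.
Proof.
move=> H; apply: eq_in_all => u; rewrite in_iota0 => Hu.
by rewrite (reach_agree 6 H Hu).
Qed.

Lemma Et_tab n E : agree n (Et (tab n E)) E.
Proof.
move=> x y Hx Hy; rewrite /Et /tab (nth_map 0) ?size_iota // (nth_map 0) ?size_iota //.
by rewrite !nth_iota.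
Qed.

Lemma goodE vs : good vs = degb (nv vs) (E vs) && diamb (nv vs) (E vs).
Proof.
by rewrite /good (degb_agree (@Et_tab (nv vs) (E vs))) (diamb_agree (@Et_tab (nv vs) (E vs))).
Qed.

Lemma nwF vs v x y : x < nv vs -> nw vs v x y = false.
Proof. by move=> Hx; rewrite /nw ltn_eqF. Qed.

Lemma EF vs x y : app3_valid vs -> nv vs <= y -> E vs x y = false.
Proof. by move=> Hv Hy; apply/negP => /(edge_bound Hv) [_]; rewrite ltnNge Hy. Qed.

Lemma EF' vs x y : app3_valid vs -> nv vs <= x -> E vs x y = false.
Proof. by move=> Hv Hx; apply/negP => /(edge_bound Hv) []; rewrite ltnNge Hx. Qed.

Lemma iso_ext vs r v s : app3_valid vs -> app3_valid r -> size vs = size r -> v < nv vs ->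
  isoP (nv vs) (E vs) (E r) s ->
  isoP (nv vs + 3) (E (rcons vs v)) (E (rcons r (s v))) (fun x => if x < nv vs then s x else x).
Proof.
move=> Hv Hr Hsz Hvn [Hb Hi He].
have Hn : nv r = nv vs by rewrite /nv Hsz.
have Hsv := Hb v Hvn.
split.
- by move=> x Hx; case: ifP => Hxn; [have := Hb x Hxn; lia | lia].
- move=> x y Hx Hy; case: ifP => Hxn; case: ifP => Hyn.
  + exact: Hi.
  + have := Hb x Hxn; move: Hyn => /negbT; rewrite -leqNgt; lia.
  + have := Hb y Hyn; move: Hxn => /negbT; rewrite -leqNgt; lia.
  + by [].
- move=> x y Hx Hy; rewrite !E_rcons.
  have Hinj : forall a, a < nv vs -> (s a == s v) = (a == v).
    by move=> a Ha; apply/eqP/eqP => [/Hi|->]; [apply| ].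
  case: ifP => Hxn; case: ifP => Hyn.
  + by rewrite He // !nwF // Hn; apply: Hb.
  + have Hyn' : nv vs <= y by rewrite leqNgt Hyn.
    rewrite (EF _ Hv Hyn') (EF _ Hr) ?Hn // (@nwF vs v x y Hxn) (@nwF r (s v) (s x) y); last by rewrite Hn Hb.
    rewrite /= /nw Hn Hinj //.
    have -> : (x == (nv vs).+1) = false by apply/negP => /eqP; lia.
    have -> : (x == (nv vs).+2) = false by apply/negP => /eqP; lia.
    have -> : (s x == (nv vs).+1) = false by apply/negP => /eqP; have := Hb x Hxn; lia.
    by have -> : (s x == (nv vs).+2) = false by apply/negP => /eqP; have := Hb x Hxn; lia.
  + have Hxn' : nv vs <= x by rewrite leqNgt Hxn.
    rewrite (EF' _ Hv Hxn') (EF' _ Hr) ?Hn // (@nwF vs v y x Hyn) (@nwF r (s v) (s y) x); last by rewrite Hn Hb.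
    rewrite /= !orbF /nw Hn Hinj //.
    have -> : (y == (nv vs).+1) = false by apply/negP => /eqP; lia.
    have -> : (y == (nv vs).+2) = false by apply/negP => /eqP; lia.
    have -> : (s y == (nv vs).+1) = false by apply/negP => /eqP; have := Hb y Hyn; lia.
    by have -> : (s y == (nv vs).+2) = false by apply/negP => /eqP; have := Hb y Hyn; lia.
  + have Hxn' : nv vs <= x by rewrite leqNgt Hxn.
    have Hyn' : nv vs <= y by rewrite leqNgt Hyn.
    rewrite (EF _ Hv Hyn') (EF _ Hr) ?Hn // /nw Hn /=.
    have -> : (y == v) = false by apply/negP => /eqP; lia.
    have -> : (x == v) = false by apply/negP => /eqP; lia.
    have -> : (y == s v) = false by apply/negP => /eqP; lia.
    by have -> : (x == s v) = false by apply/negP => /eqP; lia.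
Qed.

Lemma reach_proj vs v j u w : app3_valid (rcons vs v) -> u < nv vs ->
  w \in reach (nv vs + 3) (E (rcons vs v)) j u ->
  (if w < nv vs then w else v) \in reach (nv vs) (E vs) j u.
Proof.
move=> Hv Hu; move: (Hv); rewrite valid_rcons => /andP [Hv0 Hvn].
elim: j w => [|j IH] w.
  by rewrite !inE => /eqP ->; rewrite Hu.
rewrite mem_reachS => /orP [/IH H| /andP [Hw /hasP [z Hz Hzw]]].
  by apply: reach_mono.
have Hpz := IH z Hz.
move: Hzw; rewrite E_rcons => /or3P [Hzw | Hzw | Hzw].
- have [Hzn Hwn] := edge_bound Hv0 Hzw.
  rewrite Hwn mem_reachS Hwn; apply/orP; right; apply/hasP; exists z; last by [].
  by move: Hpz; rewrite Hzn.
- move: Hzw; rewrite /nw => /andP [/eqP Hzn Hw'].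
  move: Hpz; rewrite Hzn ltnn => Hpz; apply: reach_mono.
  case: ifP => Hwn //.
  by move: Hw' Hwn => /or3P [] /eqP -> Hlt; [exact: Hpz | lia | lia].
- move: Hzw; rewrite /nw => /andP [/eqP Hwn Hz'].
  rewrite Hwn ltnn; apply: reach_mono.
  move: Hpz; case: ifP => Hzn //.
  by move: Hz' Hzn => /or3P [] /eqP -> Hlt; [exact: id | exfalso; lia | exfalso; lia].
Qed.

Lemma good_proj vs v : app3_valid (rcons vs v) -> good (rcons vs v) -> good vs.
Proof.
move=> Hv; move: (Hv); rewrite valid_rcons => /andP [Hv0 Hvn].
rewrite !goodE nv_rcons => /andP [Hd Hm]; apply/andP; split.
  apply/allP => x; rewrite in_iota0 => Hx.
  have := allP Hd x; rewrite in_iota0 => /(_ (ltn_addr 3 Hx)).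
  apply: leq_trans; rewrite iotaD count_cat; apply: leq_trans (leq_addr _ _).
  by apply: sub_count => y /=; rewrite E_rcons => ->.
apply: diambI => u w Hu Hw.
have := diambP Hm (ltn_addr 3 Hu) (ltn_addr 3 Hw).
by move/(reach_proj Hv Hu); rewrite Hw.
Qed.

Lemma reps_valid : all app3_valid reps.
Proof. by vm_compute. Qed.

Lemma tableok_true : tableok.
Proof. by vm_compute. Qed.

Lemma classify vs : app3_valid vs -> good vs ->
  exists r s, [/\ r \in reps, size r = size vs & isoP (nv vs) (E vs) (E r) s].
Proof.
elim/last_ind: vs => [|vs v IH].
  move=> _ _; exists [::], id; split => //.
move=> Hv Hg; move: (Hv); rewrite valid_rcons => /andP [Hv0 Hvn].
have [r [s [Hr Hsz Hiso]]] := IH Hv0 (good_proj Hv Hg).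
have Hvr : app3_valid r by apply: (allP reps_valid).
have Hn : nv r = nv vs by rewrite /nv Hsz.
have Hext := iso_ext Hv0 Hvr (esym Hsz) Hvn Hiso.
have Hg' : good (rcons r (s v)).
  move: Hg; rewrite !goodE !nv_rcons Hn; exact: good_iso Hext.
have Hsv : s v < nv r by rewrite Hn; case: Hiso => Hb _ _; apply: Hb.
have := allP tableok_true r Hr => /allP /(_ (s v)); rewrite in_iota0 => /(_ Hsv).
rewrite /chk Hg' => /andP [_].
case: [seq _ | _ <- _ & _] => [//|[r' t] l] /and3P [Hr' /eqP Hsz' Hisob].
have Hn' : nv r' = nv vs + 3 by rewrite /nv Hsz' Hsz; lia.
exists r', ((nth 0 t) \o (fun x => if x < nv vs then s x else x)); split => //.
  by rewrite Hsz' size_rcons Hsz.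
rewrite nv_rcons; apply: isoP_comp Hext _.
by rewrite -Hn'; apply: isob_isoP.
Qed.

Lemma card_count (T:finType) (A : pred T) : #|A| = count A (enum T).
Proof. by rewrite enumT cardE /enum_mem size_filter. Qed.

Lemma indep_sub cs X Y : {subset X <= Y} -> indep cs Y -> indep cs X.
Proof.
move=> HXY /allP H; apply/allP => c Hc; apply/negP => /allP Hall.
by move: (H c Hc) => /negP; apply; apply/allP => w /Hall /HXY.
Qed.

Lemma srch_sound cs k R cands : srch cs k R cands ->
  forall S, uniq S -> {subset S <= cands} -> k <= size S -> indep cs (S ++ R) -> False.
Proof.
elim: k R cands => [//|k IHk] R cands.
elim: cands => [|v cs' IHc].
  move=> _ [|x S] // _ /(_ x (mem_head _ _)) //.
move=> /= /orP [Hsz | /andP [H1 H2]] S HS Hsub Hk Hind.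
  have := uniq_leq_size HS Hsub; move: Hsz Hk => /=; lia.
case HvS: (v \in S).
  have Hvi : indep cs (v :: R).
    by apply: indep_sub Hind => w; rewrite inE mem_cat => /orP [/eqP ->|->]; rewrite ?HvS ?orbT.
  move: H1; rewrite Hvi /= => H1.
  apply: (IHk _ _ H1 (rem v S)).
  - exact: rem_uniq.
  - move=> w; rewrite (mem_rem_uniq _ HS) inE => /andP [Hwv HwS].
    rewrite mem_filter; apply/andP; split.
      apply: indep_sub Hind => z; rewrite !inE mem_cat => /or3P [/eqP ->|/eqP ->|->];
        by rewrite ?HwS ?HvS ?orbT.
    by have := Hsub w HwS; rewrite inE (negbTE Hwv).
  - by rewrite size_rem //; move: Hk; case: (size S).
  - apply: indep_sub Hind => z; rewrite mem_cat inE => /or3P [Hz|/eqP ->|Hz].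
    + by move: Hz; rewrite (mem_rem_uniq _ HS) inE mem_cat => /andP [_ ->].
    + by rewrite mem_cat HvS.
    + by rewrite mem_cat Hz orbT.
apply: (IHc H2 S HS) => // w Hw.
by have := Hsub w Hw; rewrite inE => /orP [/eqP Hwv|//]; move: HvS; rewrite -Hwv Hw.
Qed.

Section TGraph.
Variables (T : finType) (e : rel T) (n : nat) (En : rel nat) (g : T -> nat).
Hypotheses (Hinj : injective g) (Hb : forall x, g x < n) (HT : #|T| = n)
  (He : forall x y, e x y = En (g x) (g y)).

Lemma permT : perm_eq [seq g x | x <- enum T] (iota 0 n).
Proof.
have Hu : uniq [seq g x | x <- enum T] by rewrite map_inj_uniq ?enum_uniq.
have Hsub : {subset [seq g x | x <- enum T] <= iota 0 n}.
  by move=> z /mapP [x _ ->]; rewrite in_iota0.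
have Hsz : size (iota 0 n) <= size [seq g x | x <- enum T] by rewrite size_map size_iota -HT cardE.
have [_ Heq] := uniq_min_size Hu Hsub Hsz.
by apply: uniq_perm => //; apply: iota_uniq.
Qed.

Lemma surjT w : w < n -> exists x, g x = w.
Proof.
move=> Hw; have : w \in [seq g x | x <- enum T] by rewrite (perm_mem permT) in_iota0.
by case/mapP => x _ ->; exists x.
Qed.

Lemma deg_count x : deg e x = count (En (g x)) (iota 0 n).
Proof.
rewrite /deg cardsE card_count -(permP permT) [RHS]count_map.
by apply: eq_count => y /=; rewrite He.
Qed.

Lemma degb_T : maxdeg e = 3 -> degb n En.
Proof.
move=> Hm; apply/allP => u; rewrite in_iota0 => Hu.
have [x <-] := surjT Hu.
by rewrite -deg_count -Hm /maxdeg; apply: (@leq_bigmax _ (fun v => deg e v)).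
Qed.

Lemma path_reach a s : path e a s -> g (last a s) \in reach n En (size s) (g a).
Proof.
elim/last_ind: s => [|s b IH]; first by rewrite /= inE.
rewrite rcons_path last_rcons size_rcons => /andP [/IH H Hab].
rewrite mem_reachS Hb /=; apply/orP; right; apply/hasP; exists (g (last a s)) => //.
by rewrite -He.
Qed.

Lemma diamb_T : diam_le e 6 -> diamb n En.
Proof.
move=> Hd; apply: diambI => u w Hu Hw.
have [a <-] := surjT Hu; have [b <-] := surjT Hw.
have [s [Hs Hp Hl]] := Hd a b.
by apply: (reach_le Hs); rewrite -Hl; apply: path_reach.
Qed.

Lemma cnbhd_g x y : (y \in cnbhd e x) = cN En (g x) (g y).
Proof. by rewrite /cnbhd inE He /cN (inj_eq Hinj). Qed.

Lemma code_upper L : idnat n En L ->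
  exists C, idcodeb e C && (#|C| <= size L).
Proof.
case/andP => /allP H1 /allP H2.
exists [set x | g x \in L]; apply/andP; split; last first.
  rewrite cardE -(size_map g); apply: uniq_leq_size.
    by rewrite map_inj_uniq ?enum_uniq.
  by move=> w /mapP [x]; rewrite mem_enum inE => Hx ->.
apply/andP; split.
  apply/forallP => x; have := H1 (g x); rewrite in_iota0 => /(_ (Hb x)) /hasP [w Hw /andP [HwL Hc]].
  move: Hw; rewrite in_iota0 => /surjT [y Hy]; subst w.
  by apply/set0Pn; exists y; rewrite !inE HwL andbT -(inj_eq Hinj) He.
apply/forallP => a; apply/forallP => b; apply/implyP => Hab.
have := H2 (g a); rewrite in_iota0 => /(_ (Hb a)) /allP /(_ (g b)); rewrite in_iota0 => /(_ (Hb b)).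
rewrite (inj_eq Hinj) (negbTE Hab) /= => /hasP [w Hw /andP [HwL Hc]].
move: Hw; rewrite in_iota0 => /surjT [y Hy]; subst w.
apply/negP => /eqP Heq; have := congr1 (fun A : {set T} => y \in A) Heq.
by rewrite /= !in_setI !cnbhd_g !inE HwL !andbT => Heq'; move: Hc; rewrite Heq' eqxx.
Qed.

Lemma code_indep C cs : idcodeb e C -> {subset cs <= allcons n En} ->
  indep cs [seq g x | x <- enum (~: C)].
Proof.
case/andP => /forallP H1 /forallP H2 Hcs.
have HR : forall y, (g y \in [seq g x | x <- enum (~: C)]) = (y \notin C).
  by move=> y; rewrite mem_map // mem_enum inE.
apply/allP => c /Hcs; rewrite mem_cat => /orP [/mapP [v Hv ->]| /allpairsPdep [u [v [Hu Hv ->]]]].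
  apply/negP => /allP Hall.
  move: Hv; rewrite in_iota0 => /surjT [x Hx]; subst v.
  have /set0Pn [y] := H1 x; rewrite inE => /andP [Hyx HyC].
  have : g y \in [seq w <- iota 0 n | cN En (g x) w] by rewrite mem_filter in_iota0 Hb -cnbhd_g Hyx.
  by move/Hall; rewrite HR HyC.
apply/negP => /allP Hall.
move: Hv; rewrite mem_filter in_iota0 => /andP [Huv Hv].
move: Hu; rewrite in_iota0 => /surjT [a Ha]; subst u.
move: Hv => /surjT [b Hb']; subst v.
have Hab : a != b by apply: contraNneq Huv => ->.
have := H2 a => /forallP /(_ b) /implyP /(_ Hab) /eqP; apply.
apply/setP => y; rewrite !in_setI !cnbhd_g; case HyC: (y \in C); rewrite ?andbF ?andbT //.
apply/eqP; apply: contraT => Hne.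
have : g y \in [seq w <- iota 0 n | cN En (g a) w != cN En (g b) w] by rewrite mem_filter in_iota0 Hb Hne.
by move/Hall; rewrite HR HyC.
Qed.

Lemma code_lower cs k : {subset cs <= allcons n En} -> srch cs k [::] (iota 0 n) ->
  forall C, idcodeb e C -> n < k + #|C|.
Proof.
move=> Hcs Hs C HC.
have Hind := code_indep HC Hcs.
have Hu : uniq [seq g x | x <- enum (~: C)] by rewrite map_inj_uniq ?enum_uniq.
have Hsub : {subset [seq g x | x <- enum (~: C)] <= iota 0 n}.
  by move=> z /mapP [x _ ->]; rewrite in_iota0.
have Hsz : size [seq g x | x <- enum (~: C)] = n - #|C|.
  rewrite size_map -cardE -HT -(cardsC C); lia.
case: (leqP k (size [seq g x | x <- enum (~: C)])) => Hk.
  by exfalso; apply: (srch_sound Hs Hu Hsub Hk); rewrite cats0.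
move: Hk; rewrite Hsz; move: #|C| => m; lia.
Qed.

End TGraph.

Lemma gammaID_eq (T : finType) (e : rel T) m :
  (exists C, idcodeb e C && (#|C| <= m)) -> (forall C, idcodeb e C -> m <= #|C|) ->
  gammaID e = m.
Proof.
move=> [C1 /andP [HC1 Hm1]] Hlow; rewrite /gammaID; case: pickP => [C0 HC0 | Hnone].
  case: arg_minnP => // C HC Hmin.
  apply/eqP; rewrite eqn_leq (Hlow _ HC) andbT.
  exact: leq_trans (Hmin _ HC1) Hm1.
by move: (Hnone C1); rewrite HC1.
Qed.

Lemma gammasok_true : gammasok.
Proof. by vm_compute. Qed.

Lemma main_nat (T : finType) (e : rel T) :
  appended_3star e -> maxdeg e = 3 -> diam_le e 6 ->
  exists p, #|T| = 3 * p + 4 /\ gammaID e = 2 * p + 3.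
Proof.
move=> [vs [Hv [Hcard [f [Hfi Hfb Hfe]]]]] Hmax Hdiam.
have HT : #|T| = nv vs by [].
have Hfb' : forall x, f x < nv vs by [].
have Hg : good vs.
  rewrite goodE; apply/andP; split.
    exact: (degb_T Hfi Hfb' HT Hfe Hmax).
  exact: (diamb_T Hfi Hfb' HT Hfe Hdiam).
have [r [s [Hr Hsz [Hb Hi He]]]] := classify Hv Hg.
have Hn : nv r = nv vs by rewrite /nv Hsz.
pose g x := s (f x).
have Hgi : injective g by move=> x y /Hi; rewrite /g => H; apply: Hfi; apply: H; apply: Hfb'.
have Hgb : forall x, g x < nv vs by move=> x; apply: Hb.
have Hge : forall x y, e x y = E r (g x) (g y) by move=> x y; rewrite Hfe -He.
have := allP gammasok_true r Hr; case/and3P => Hid /eqP HL Hs.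
rewrite Hn in Hid Hs.
exists (size vs); split => //.
apply: gammaID_eq.
  by rewrite -Hsz -HL; apply: (code_upper Hgi Hgb HT Hge).
move=> C HC.
have Hsub : {subset mincons (allcons (nv vs) (E r)) <= allcons (nv vs) (E r)}.
  by move=> c; rewrite mem_filter => /andP [].
have := code_lower Hgi Hgb HT Hge Hsub Hs HC.
rewrite /nv Hsz; move: #|C| => m; lia.
Qed.

Local Open Scope ring_scope.
Theorem mainTheorem13 (T : finType) (e : rel T) (n : nat) :
  appended_3star e -> #|T| = n -> maxdeg e = 3%N -> diam_le e 6 ->
  (gammaID e)%:R = 2%:R / 3%:R * n%:R + 1 / 3%:R :> rat.
Proof.
move=> H3 HTn Hmax Hdiam; have [p [Hp Hg]] := main_nat H3 Hmax Hdiam.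
rewrite Hg -HTn Hp.
by field.
Qed.
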